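(* There are a polynomial $p$ and a sequence $\{D_n\}_{n\ge1}$ of definite causal theories such that, for every $n$, $D_n$ is on signature $\{x_1,\dots,x_n\}$, the set of models of $D_n$ is exactly PARITY$_n$, and $|D_n|\le p(n)$.
   Context: A literal is a variable $x$ or its negation $\neg x$. A definite causal theory on signature $\{x_1,\dots,x_n\}$ is a finite set of causal rules $H\Leftarrow G$, where $H$ is a literal over $x_1,\dots,x_n$ or $\bot$, and $G$ is a propositional formula (connectives $\wedge,\vee,\neg$) over $x_1,\dots,x_n$. For $I\subseteq\{x_1,\dots,x_n\}$ (viewed as the interpretation making exactly the variables in $I$ true), the reduct $D^I$ is the set of heads $H$ of all rules $H\Leftarrow G$ of $D$ with $I\models G$. $I$ is a model of $D$ if $I$ is the unique interpretation of $\{x_1,\dots,x_n\}$ satisfying every element of $D^I$. The size $|D|$ of a (not necessarily simple) definite theory is the number of connectives occurring in it. Strings $w\in\{0,1\}^n$ are identified with $\{x_i:w_i=1\}$; PARITY$_n$ is the set of strings in $\{0,1\}^n$ with an odd number of 1's. *)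

(* Defs.v *)
From HB Require Import structures.
From mathcomp Require Import all_boot all_order all_algebra.
Set Implicit Arguments. Unset Strict Implicit. Unset Printing Implicit Defensive.

(* Propositional formulas over the signature {x_1,...,x_n}, variables
   indexed by 'I_n (x_(i+1) is Var i). Connectives: and, or, not. *)
Inductive formula (n : nat) : Type :=
| Var of 'I_n
| Neg of formula n
| And of formula n & formula n
| Or of formula n & formula n.

(* Interpretations: subsets of the variables (the true ones). *)
Definition interp (n : nat) := {set 'I_n}.

Fixpoint sat (n : nat) (I : interp n) (G : formula n) : bool :=
  match G with
  | Var i => i \in I
  | Neg g => ~~ sat I g
  | And g h => sat I g && sat I h
  | Or g h => sat I g || sat I h
  end.

(* A literal: a variable with a polarity (true = x, false = ~x). *)
Definition literal (n : nat) := ('I_n * bool)%type.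

(* A head: Some literal, or None for bottom. *)
Definition head (n : nat) := option (literal n).

Definition sat_head (n : nat) (I : interp n) (H : head n) : bool :=
  match H with
  | None => false
  | Some (i, b) => (i \in I) == b
  end.

Record rule (n : nat) := Rule { rhead : head n; rbody : formula n }.

Definition theory (n : nat) := seq (rule n).

Definition reduct (n : nat) (D : theory n) (I : interp n) : seq (head n) :=
  [seq rhead r | r <- D & sat I (rbody r)].

Definition is_model (n : nat) (D : theory n) (I : interp n) : Prop :=
  forall J : interp n, all (sat_head J) (reduct D I) <-> J = I.

(* Size: number of connectives occurring in the theory. *)
Fixpoint fsize (n : nat) (G : formula n) : nat :=
  match G with
  | Var _ => 0
  | Neg g => (fsize g).+1
  | And g h => (fsize g + fsize h).+1
  | Or g h => (fsize g + fsize h).+1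
  end.

Definition hsize (n : nat) (H : head n) : nat :=
  match H with
  | Some (_, false) => 1
  | _ => 0
  end.

Definition theory_size (n : nat) (D : theory n) : nat :=
  sumn [seq hsize (rhead r) + fsize (rbody r) | r <- D].

Definition parity (n : nat) (I : interp n) : bool := odd #|I|.

(* Main.v *)
Require Import Defs.
From HB Require Import structures.
From mathcomp Require Import all_boot all_order all_algebra.
From mathcomp Require Import zify.
Import GRing.Theory Num.Theory.

Definition ffalse k : formula k.+1 := And (Var ord0) (Neg (Var ord0)).
Definition fxor {n} (a b : formula n) := Or (And a (Neg b)) (And (Neg a) b).

Fixpoint pf k (fuel s len : nat) : formula k.+1 :=
  match fuel with
  | 0 => ffalse k
  | fuel'.+1 =>
    match len with
    | 0 => ffalse k
    | 1 => Var (inord s)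
    | _ => fxor (pf k fuel' s len./2) (pf k fuel' (s + len./2) (len - len./2))
    end
  end.

Lemma pf_sat k (I : interp k.+1) fuel : forall s len, len <= fuel ->
  sat I (pf k fuel s len) = odd (count (fun i => inord i \in I) (iota s len)).
Proof.
elim: fuel => [|f IH] s len hl /=.
  have -> : len = 0 by lia.
  by rewrite /= andbN.
case: len hl => [|[|len]] hl.
- by rewrite /= andbN.
- by rewrite /= addn0; case: (_ \in _).
have E : len.+2 = len.+2./2 + (len.+2 - len.+2./2) by lia.
rewrite [in RHS]E iotaD count_cat oddD.
rewrite /fxor /= !IH; try lia.
by case: (odd _); case: (odd _).
Qed.

Lemma card_count k (I : interp k.+1) :
  #|I| = count (fun i => inord i \in I) (iota 0 k.+1).
Proof.
rewrite cardE /enum_mem size_filter -enumT -val_enum_ord count_map.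
apply: eq_count => i /=. by rewrite inord_val.
Qed.

Definition P k : formula k.+1 := pf k k.+1 0 k.+1.

Definition Dk k : theory k.+1 :=
  [seq Rule (Some (i, true)) (Var i) | i <- enum 'I_k.+1] ++
  [seq Rule (Some (i, false)) (Neg (Var i)) | i <- enum 'I_k.+1] ++
  [:: Rule None (Neg (P k))].

Definition D (n : nat) : theory n :=
  match n with 0 => [::] | k.+1 => Dk k end.

Lemma all_reduct n (T : theory n) I J :
  all (sat_head J) (reduct T I) =
  all (fun r => sat I (rbody r) ==> sat_head J (rhead r)) T.
Proof.
elim: T => //= r T IH; rewrite /reduct /= in IH *.
by case: (sat I (rbody r)) => /=; rewrite IH.
Qed.

Lemma Dk_all k (I J : interp k.+1) :
  all (sat_head J) (reduct (Dk k) I) = (J == I) && sat I (P k).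
Proof.
rewrite all_reduct /Dk !all_cat !all_map /= andbT.
case: (sat I (P k)); rewrite /= ?andbT ?andbF //.
apply/andP/eqP.
- case=> /allP H1 /allP H2; apply/setP => i.
  have := H1 i ltac:(by rewrite -enumT mem_enum); have := H2 i ltac:(by rewrite -enumT mem_enum) => /=.
  by case: (i \in I); case: (i \in J).
- move=> ->; split; apply/allP => i _ /=; by case: (i \in I).
Qed.

Lemma sumn_mc (T : Type) (s : seq T) (f : T -> nat) c :
  (forall x, f x = c) -> sumn (map f s) = c * size s.
Proof. move=> hf; elim: s => [|x s IH] /=; [by rewrite muln0 | rewrite IH hf; lia]. Qed.

Lemma sumn_const (T : Type) (s : seq T) c :
  sumn [seq c | _ <- s] = c * size s.
Proof. elim: s => [|_ s IH] /=; [by rewrite muln0 | rewrite IH; lia]. Qed.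

Lemma pf_size k fuel : forall s len, len <= fuel -> 0 < len ->
  fsize (pf k fuel s len) + 3 <= 3 * len ^ 2.
Proof.
elim: fuel => [|f IH] s len hl h0 /=; first lia.
case: len hl h0 => [|[|len]] hl h0 //=.
have H1 := IH s len.+2./2 ltac:(lia) ltac:(lia).
have H2 := IH (s + len.+2./2) (len.+2 - len.+2./2) ltac:(lia) ltac:(lia).
set a := len.+2./2 in H1 H2 *.
have ha : len.+2 = a + (len.+2 - a) by lia.
have hb : a <= len.+2 - a <= a.+1 by lia.
set b := len.+2 - a in H2 hb ha *.
rewrite ha.
move: H1 H2 hb; rewrite /fxor /=. change (len./2.+1) with a. nia.
Qed.

Theorem mainTheorem19 :
  exists (p : {poly int}) (D : forall n : nat, theory n),
    forall n : nat, (1 <= n)%N ->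
      (forall I : interp n, is_model (D n) I <-> parity I) /\
      ((theory_size (D n))%:Z <= p.[n%:Z])%R.
Proof.
exists (('X^2 *+ 5)%R), D => -[//|k] _; split.
- move=> I; rewrite /is_model /parity card_count -(@pf_sat k I k.+1) //.
  rewrite -/(P k) /=.
  split.
  + by move=> /(_ I) [_ /(_ erefl)]; rewrite Dk_all eqxx.
  + move=> HP J; rewrite Dk_all HP andbT; split; [by move/eqP | by move->].
- rewrite /theory_size /D /Dk !map_cat !sumn_cat -!map_comp.
  rewrite (@sumn_mc _ _ _ 0) // (@sumn_mc _ _ _ 2) // -enumT size_enum_ord /=.
  have := pf_size k k.+1 0 k.+1 (leqnn k.+1) (ltn0Sn k).
  rewrite -/(P k) => h.
  rewrite hornerMn hornerXn.
  lia.
Qed.
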